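(* For any set $\Phi\cup\{\psi\}$ of $\mathsf{BSML}^{\sqcup}$-formulas, if $\Phi\vdash\psi$ in the natural deduction system $\mathcal{S}^{\sqcup}$ described below, then $\Phi\models\psi$.
   Context: Syntax: $\mathsf{BSML}^{\sqcup}$-formulas $\phi ::= p \mid \neg\phi \mid (\phi\wedge\phi) \mid (\phi\vee\phi) \mid \Diamond\phi \mid \mathrm{NE}\mid\phi\sqcup\phi$ ($p$ from a countably infinite set of variables). Classical formulas (denoted $\alpha,\beta$) are those built from $p,\neg,\wedge,\vee,\Diamond$ only. Abbreviations: $\Box\phi:=\neg\Diamond\neg\phi$; $\bot:=p\wedge\neg p$ (fixed $p$); $\bot\!\!\!\bot:=\bot\wedge\mathrm{NE}$. Semantics on Kripke models $M=(W,R,V)$ and states $s\subseteq W$: $s\models p$ iff $s\subseteq V(p)$; $s\dashv p$ iff $s\cap V(p)=\emptyset$; $s\models\mathrm{NE}$ iff $s\ne\emptyset$; $s\dashv\mathrm{NE}$ iff $s=\emptyset$; $s\models\neg\phi$ iff $s\dashv\phi$; $s\dashv\neg\phi$ iff $s\models\phi$; $s\models\phi\wedge\psi$ iff both; $s\dashv\phi\wedge\psi$ iff $s=t\cup u$ with $t\dashv\phi$, $u\dashv\psi$; $s\models\phi\vee\psi$ iff $s=t\cup u$ with $t\models\phi$, $u\models\psi$; $s\dashv\phi\vee\psi$ iff $s\dashv\phi$ and $s\dashv\psi$; $s\models\phi\sqcup\psi$ iff $s\models\phi$ or $s\models\psi$; $s\dashv\phi\sqcup\psi$ iff $s\dashv\phi$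 and $s\dashv\psi$; $s\models\Diamond\phi$ iff every $w\in s$ has a nonempty $t\subseteq R[w]$ with $t\models\phi$; $s\dashv\Diamond\phi$ iff $R[w]\dashv\phi$ for all $w\in s$ (where $R[w]=\{v:wRv\}$). $\Phi\models\psi$ iff every state (in every model) supporting all formulas of $\Phi$ supports $\psi$. System $\mathcal{S}^{\sqcup}$ (natural deduction with assumptions that may be discharged; $\Phi\vdash\psi$ iff there is a derivation of $\psi$ all of whose undischarged assumptions lie in $\Phi$; ''$A\Leftrightarrow B$'' means both one-step rules $A/B$ and $B/A$; $\phi,\psi,\chi$ range over all formulas): (a) $\wedge$I: from $\phi,\psi$ infer $\phi\wedge\psi$; $\wedge$E: from $\phi\wedge\psi$ infer $\phi$, and infer $\psi$. (b) $\neg$I: from a derivation of $\bot$ from assumption $\alpha$ infer $\neg\alpha$ discharging $\alpha$, provided the undischarged assumptions of that derivation contain no $\mathrm{NE}$; $\neg$E: from $\alpha$ and $\neg\alpha$ infer $\beta$; $\neg\neg\phi\Leftrightarrow\phi$; $\neg(\phi\wedge\psi)\Leftrightarrow\neg\phi\vee\neg\psi$; $\neg(\phi\vee\psi)\Leftrightarrow\neg\phi\wedge\neg\psi$; $\neg\mathrm{NE}\Leftrightarrow\bot$. (c) $\vee$I: from $\phi$ infer $\phi\vee\psi$, provided $\psi$ contains no $\mathrm{NE}$; $\vee$W: from $\phi$ infer $\phi\vee\phi$; Com: from $\phi\vee\psi$ infer $\psi\vee\phi$; $\vee$E: from $\phi\vee\psi$, a derivation of $\chi$ from $\phi$ and a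 derivation of $\chi$ from $\psi$, infer $\chi$ (discharging $\phi,\psi$), provided the undischarged assumptions of the two subderivations contain no $\mathrm{NE}$ and $\chi$ contains no $\sqcup$; $\vee$Mon: from $\phi\vee\psi$ and a derivation of $\chi$ from $\psi$ whose undischarged assumptions contain no $\mathrm{NE}$, infer $\phi\vee\chi$ (discharging $\psi$). (d) from $\bot\vee\phi$ infer $\phi$; from $\bot\!\!\!\bot\vee\phi$ infer any $\psi$. (e) $\Diamond$Mon: if $\psi$ is derivable from $\phi$ alone (no other undischarged assumptions), from $\Diamond\phi$ infer $\Diamond\psi$; $\Box$Mon: if $\psi$ is derivable from $\phi_1,\dots,\phi_n$ alone, from $\Box\phi_1,\dots,\Box\phi_n$ infer $\Box\psi$; $\neg\Diamond\phi\Leftrightarrow\Box\neg\phi$. (f) from $\Diamond(\phi\vee(\psi\wedge\mathrm{NE}))$ infer $\Diamond\psi$; from $\Diamond\phi,\Diamond\psi$ infer $\Diamond(\phi\vee\psi)$; from $\Box(\phi\wedge\mathrm{NE})$ infer $\Diamond\phi$; from $\Box\phi,\Diamond\psi$ infer $\Box(\phi\vee\psi)$. (g) $\sqcup$I: from $\phi$ infer $\phi\sqcup\psi$ and $\psi\sqcup\phi$; $\sqcup$E: from $\phi\sqcup\psi$, a derivation of $\chi$ from $\phi$ and one from $\psi$, infer $\chi$ (discharging); from $\phi\vee(\psi\sqcup\chi)$ infer $(\phi\vee\psi)\sqcup(\phi\vee\chi)$; $\neg(\phi\sqcup\psi)\Leftrightarrow\neg\phi\wedge\neg\psi$; axiom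 $\bot\sqcup\mathrm{NE}$. (h) $\Diamond(\phi\sqcup\psi)\Leftrightarrow\Diamond\phi\vee\Diamond\psi$; $\Box(\phi\sqcup\psi)\Leftrightarrow\Box\phi\vee\Box\psi$. *)

(* Defs.v *)
From Stdlib Require Import List.

Inductive form : Type :=
| Var : nat -> form
| Neg : form -> form
| And : form -> form -> form
| Or  : form -> form -> form
| Dia : form -> form
| NE  : form
| GOr : form -> form -> form.

Fixpoint classical (f : form) : bool :=
  match f with
  | Var _ => true
  | Neg g => classical g
  | And g h | Or g h => classical g && classical h
  | Dia g => classical g
  | NE => false
  | GOr _ _ => false
  end.

Fixpoint ne_free (f : form) : bool :=
  match f with
  | Var _ => true
  | Neg g | Dia g => ne_free g
  | And g h | Or g h | GOr g h => ne_free g && ne_free h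
  | NE => false
  end.

Fixpoint gor_free (f : form) : bool :=
  match f with
  | Var _ | NE => true
  | Neg g | Dia g => gor_free g
  | And g h | Or g h => gor_free g && gor_free h
  | GOr _ _ => false
  end.

Definition Box (f : form) : form := Neg (Dia (Neg f)).
Definition p0 : nat := 0.
Definition Bot : form := And (Var p0) (Neg (Var p0)).
Definition BotBot : form := And Bot NE.

Record model : Type := Model {
  W : Type;
  Rel : W -> W -> Prop;
  Val : nat -> W -> Prop
}.

Definition state (M : model) : Type := W M -> Prop.

Definition is_union {M : model} (s t u : state M) : Prop :=
  forall w, s w <-> (t w \/ u w).

Fixpoint supp (M : model) (f : form) (s : state M) {struct f} : Prop :=
  match f with
  | Var p => forall w, s w -> Val M p w
  | Neg g => anti M g s
  | And g h => supp M g s /\ supp M h s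
  | Or g h => exists t u, is_union s t u /\ supp M g t /\ supp M h u
  | Dia g => forall w, s w ->
      exists t : state M, (forall v, t v -> Rel M w v) /\ (exists v, t v) /\ supp M g t
  | NE => exists w, s w
  | GOr g h => supp M g s \/ supp M h s
  end
with anti (M : model) (f : form) (s : state M) {struct f} : Prop :=
  match f with
  | Var p => forall w, s w -> ~ Val M p w
  | Neg g => supp M g s
  | And g h => exists t u, is_union s t u /\ anti M g t /\ anti M h u
  | Or g h => anti M g s /\ anti M h s
  | Dia g => forall w, s w -> anti M g (fun v => Rel M w v)
  | NE => forall w, ~ s w
  | GOr g h => anti M g s /\ anti M h s
  end.

Definition entails (Phi : form -> Prop) (psi : form) : Prop :=
  forall (M : model) (s : state M),
    (forall phi, Phi phi -> supp M phi s) -> supp M psi s.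

(* Der G f : there is a derivation of f all of whose undischarged assumptions
   lie in the set G. *)

Definition ext (G : form -> Prop) (f : form) : form -> Prop :=
  fun x => G x \/ x = f.

(* D is a (possible) set of undischarged assumptions of a subderivation
   discharging f in a context G, none of which contains NE *)
Definition nefree_sub (D G : form -> Prop) (f : form) : Prop :=
  (forall x, D x -> ext G f x) /\ (forall x, D x -> ne_free x = true).

Definition only (f : form) : form -> Prop := fun x => x = f.

Inductive Der : (form -> Prop) -> form -> Prop :=
| D_ax G f : G f -> Der G f
| D_andI G f g : Der G f -> Der G g -> Der G (And f g)
| D_andE1 G f g : Der G (And f g) -> Der G f
| D_andE2 G f g : Der G (And f g) -> Der G g
| D_negI G D a : classical a = true -> nefree_sub D G a -> Der D Bot ->
    Der G (Neg a)
| D_negE G a b : classical a = true -> classical b = true ->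
    Der G a -> Der G (Neg a) -> Der G b
| D_dneE G f : Der G (Neg (Neg f)) -> Der G f
| D_dneI G f : Der G f -> Der G (Neg (Neg f))
| D_dmAnd1 G f g : Der G (Neg (And f g)) -> Der G (Or (Neg f) (Neg g))
| D_dmAnd2 G f g : Der G (Or (Neg f) (Neg g)) -> Der G (Neg (And f g))
| D_dmOr1 G f g : Der G (Neg (Or f g)) -> Der G (And (Neg f) (Neg g))
| D_dmOr2 G f g : Der G (And (Neg f) (Neg g)) -> Der G (Neg (Or f g))
| D_negNE1 G : Der G (Neg NE) -> Der G Bot
| D_negNE2 G : Der G Bot -> Der G (Neg NE)
| D_orI G f g : ne_free g = true -> Der G f -> Der G (Or f g)
| D_orW G f : Der G f -> Der G (Or f f)
| D_orCom G f g : Der G (Or f g) -> Der G (Or g f)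
| D_orE G D1 D2 f g h :
    Der G (Or f g) ->
    nefree_sub D1 G f -> Der D1 h ->
    nefree_sub D2 G g -> Der D2 h ->
    gor_free h = true ->
    Der G h
| D_orMon G D f g h :
    Der G (Or f g) -> nefree_sub D G g -> Der D h -> Der G (Or f h)
| D_botOr G f : Der G (Or Bot f) -> Der G f
| D_botbotOr G f g : Der G (Or BotBot f) -> Der G g
| D_diaMon G f g : Der (only f) g -> Der G (Dia f) -> Der G (Dia g)
| D_boxMon G (l : list form) g :
    Der (fun x => In x l) g -> (forall f, In f l -> Der G (Box f)) ->
    Der G (Box g)
| D_negDia1 G f : Der G (Neg (Dia f)) -> Der G (Box (Neg f))
| D_negDia2 G f : Der G (Box (Neg f)) -> Der G (Neg (Dia f))
| D_diaNE G f g : Der G (Dia (Or f (And g NE))) -> Der G (Dia g)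
| D_diaJoin G f g : Der G (Dia f) -> Der G (Dia g) -> Der G (Dia (Or f g))
| D_boxNE G f : Der G (Box (And f NE)) -> Der G (Dia f)
| D_boxDia G f g : Der G (Box f) -> Der G (Dia g) -> Der G (Box (Or f g))
| D_gorI1 G f g : Der G f -> Der G (GOr f g)
| D_gorI2 G f g : Der G f -> Der G (GOr g f)
| D_gorE G f g h :
    Der G (GOr f g) -> Der (ext G f) h -> Der (ext G g) h -> Der G h
| D_gorDist G f g h :
    Der G (Or f (GOr g h)) -> Der G (GOr (Or f g) (Or f h))
| D_negGor1 G f g : Der G (Neg (GOr f g)) -> Der G (And (Neg f) (Neg g))
| D_negGor2 G f g : Der G (And (Neg f) (Neg g)) -> Der G (Neg (GOr f g))
| D_gorAx G : Der G (GOr Bot NE)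
| D_diaGor1 G f g : Der G (Dia (GOr f g)) -> Der G (Or (Dia f) (Dia g))
| D_diaGor2 G f g : Der G (Or (Dia f) (Dia g)) -> Der G (Dia (GOr f g))
| D_boxGor1 G f g : Der G (Box (GOr f g)) -> Der G (Or (Box f) (Box g))
| D_boxGor2 G f g : Der G (Or (Box f) (Box g)) -> Der G (Box (GOr f g)).

(* Main.v *)
Require Import Defs.
From Stdlib Require Import List Classical.

Lemma supp_ext M f : forall s s' : state M, (forall w, s w <-> s' w) ->
  (supp M f s -> supp M f s') /\ (anti M f s -> anti M f s').
Proof.
  induction f; intros s s' H; simpl.
  - split; intros Hs w Hw; apply Hs, H, Hw.
  - destruct (IHf s s' H); tauto.
  - destruct (IHf1 s s' H), (IHf2 s s' H). split; [tauto|].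
    intros (t & u & Hu & Ht & Hu'). exists t, u. split; [|tauto].
    intro w. rewrite <- H. apply Hu.
  - destruct (IHf1 s s' H), (IHf2 s s' H). split; [|tauto].
    intros (t & u & Hu & Ht & Hu'). exists t, u. split; [|tauto].
    intro w. rewrite <- H. apply Hu.
  - split; intros Hs w Hw; apply Hs, H, Hw.
  - split. intros [w Hw]; exists w; apply H; auto.
    intros Hs w Hw; apply (Hs w); apply H; auto.
  - destruct (IHf1 s s' H), (IHf2 s s' H). tauto.
Qed.

Lemma down M f : ne_free f = true -> forall s s' : state M, (forall w, s' w -> s w) ->
  (supp M f s -> supp M f s') /\ (anti M f s -> anti M f s').
Proof.
  induction f; simpl; intros Hf s s' H; try discriminate.
  - split; intros Hs w Hw; apply Hs, H, Hw.
  - destruct (IHf Hf s s' H); tauto.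
  - apply andb_prop in Hf as [H1 H2]. destruct (IHf1 H1 s s' H), (IHf2 H2 s s' H). split; [tauto|].
    intros (t & u & Hu & Ht & Hu'). exists (fun w => s' w /\ t w), (fun w => s' w /\ u w).
    split; [|split].
    + intro w. specialize (Hu w). split; [intro Hw; specialize (H w Hw); tauto | tauto].
    + exact (proj2 (IHf1 H1 t _ (fun w Hw => proj2 Hw)) Ht).
    + exact (proj2 (IHf2 H2 u _ (fun w Hw => proj2 Hw)) Hu').
  - apply andb_prop in Hf as [H1 H2]. destruct (IHf1 H1 s s' H), (IHf2 H2 s s' H). split; [|tauto].
    intros (t & u & Hu & Ht & Hu'). exists (fun w => s' w /\ t w), (fun w => s' w /\ u w).
    split; [|split].
    + intro w. specialize (Hu w). split; [intro Hw; specialize (H w Hw); tauto | tauto].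
    + exact (proj1 (IHf1 H1 t _ (fun w Hw => proj2 Hw)) Ht).
    + exact (proj1 (IHf2 H2 u _ (fun w Hw => proj2 Hw)) Hu').
  - split; intros Hs w Hw; apply Hs, H, Hw.
  - apply andb_prop in Hf as [H1 H2]. destruct (IHf1 H1 s s' H), (IHf2 H2 s s' H). tauto.
Qed.

Lemma empty M f : ne_free f = true -> forall s : state M, (forall w, ~ s w) ->
  supp M f s /\ anti M f s.
Proof.
  induction f; simpl; intros Hf s Hs; try discriminate.
  - split; intros w Hw; exfalso; eapply Hs; eauto.
  - destruct (IHf Hf s Hs); tauto.
  - apply andb_prop in Hf as [H1 H2]. destruct (IHf1 H1 s Hs), (IHf2 H2 s Hs).
    split; [tauto|]. exists s, s. split; [intro w; tauto | tauto].
  - apply andb_prop in Hf as [H1 H2]. destruct (IHf1 H1 s Hs), (IHf2 H2 s Hs).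
    split; [|tauto]. exists s, s. split; [intro w; tauto | tauto].
  - split; intros w Hw; exfalso; eapply Hs; eauto.
  - apply andb_prop in Hf as [H1 H2]. destruct (IHf1 H1 s Hs), (IHf2 H2 s Hs). tauto.
Qed.

Lemma union M f : gor_free f = true -> forall s t u : state M, is_union s t u ->
  (supp M f t -> supp M f u -> supp M f s) /\ (anti M f t -> anti M f u -> anti M f s).
Proof.
  induction f; simpl; intros Hf s t u H; try discriminate.
  - split; intros H1 H2 w Hw; destruct (proj1 (H w) Hw); auto.
  - destruct (IHf Hf s t u H); tauto.
  - apply andb_prop in Hf as [H1 H2]. destruct (IHf1 H1 s t u H), (IHf2 H2 s t u H).
    split; [tauto|].
    intros (t1 & u1 & Hu1 & Ht1 & Hu1') (t2 & u2 & Hu2 & Ht2 & Hu2').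
    exists (fun w => t1 w \/ t2 w), (fun w => u1 w \/ u2 w). split; [|split].
    + intro w. rewrite (H w), (Hu1 w), (Hu2 w). tauto.
    + apply (proj2 (IHf1 H1 _ t1 t2 (fun w => iff_refl _))); auto.
    + apply (proj2 (IHf2 H2 _ u1 u2 (fun w => iff_refl _))); auto.
  - apply andb_prop in Hf as [H1 H2]. destruct (IHf1 H1 s t u H), (IHf2 H2 s t u H).
    split; [|tauto].
    intros (t1 & u1 & Hu1 & Ht1 & Hu1') (t2 & u2 & Hu2 & Ht2 & Hu2').
    exists (fun w => t1 w \/ t2 w), (fun w => u1 w \/ u2 w). split; [|split].
    + intro w. rewrite (H w), (Hu1 w), (Hu2 w). tauto.
    + apply (proj1 (IHf1 H1 _ t1 t2 (fun w => iff_refl _))); auto.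
    + apply (proj1 (IHf2 H2 _ u1 u2 (fun w => iff_refl _))); auto.
  - split; intros H1 H2 w Hw; destruct (proj1 (H w) Hw); auto.
  - split.
    + intros [w Hw] _; exists w; apply H; auto.
    + intros H1 H2 w Hw. destruct (proj1 (H w) Hw); firstorder.
Qed.

Fixpoint tr M (f : form) (w : W M) : Prop :=
 match f with
 | Var p => Val M p w
 | Neg g => ~ tr M g w
 | And g h => tr M g w /\ tr M h w
 | Or g h => tr M g w \/ tr M h w
 | Dia g => exists v, Rel M w v /\ tr M g v
 | NE => True
 | GOr _ _ => True
 end.

Lemma char M f : classical f = true -> forall s : state M,
  (supp M f s <-> forall w, s w -> tr M f w) /\ (anti M f s <-> forall w, s w -> ~ tr M f w).
Proof.
  induction f; simpl; intros Hf s; try discriminate.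
  - split; reflexivity.
  - destruct (IHf Hf s) as [A B]. split; [exact B|]. rewrite A.
    split; intros K w Hw; [intro N; apply N; auto | apply NNPP; auto].
  - apply andb_prop in Hf as [H1 H2]. split.
    + rewrite (proj1 (IHf1 H1 s)), (proj1 (IHf2 H2 s)). firstorder.
    + split.
      * intros (t & u & Hu & Ht & Hu') w Hw [T1 T2].
        pose proof (proj1 (proj2 (IHf1 H1 t)) Ht) as A1. pose proof (proj1 (proj2 (IHf2 H2 u)) Hu') as A2.
        destruct (proj1 (Hu w) Hw); firstorder.
      * intro K. exists (fun w => s w /\ ~ tr M f1 w), (fun w => s w /\ ~ tr M f2 w).
        split; [|split].
        -- intro w; split; [|tauto]. intro Hw; specialize (K w Hw).
           destruct (classic (tr M f1 w)); tauto.
        -- apply (proj2 (proj2 (IHf1 H1 _))). intros w [_ ?]; auto.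
        -- apply (proj2 (proj2 (IHf2 H2 _))). intros w [_ ?]; auto.
  - apply andb_prop in Hf as [H1 H2]. split.
    + split.
      * intros (t & u & Hu & Ht & Hu') w Hw.
        pose proof (proj1 (proj1 (IHf1 H1 t)) Ht) as A1. pose proof (proj1 (proj1 (IHf2 H2 u)) Hu') as A2.
        destruct (proj1 (Hu w) Hw); firstorder.
      * intro K. exists (fun w => s w /\ tr M f1 w), (fun w => s w /\ tr M f2 w).
        split; [|split].
        -- intro w; split; [|tauto]. intro Hw; specialize (K w Hw). tauto.
        -- apply (proj2 (proj1 (IHf1 H1 _))). intros w [_ ?]; auto.
        -- apply (proj2 (proj1 (IHf2 H2 _))). intros w [_ ?]; auto.
    + rewrite (proj2 (IHf1 H1 s)), (proj2 (IHf2 H2 s)). firstorder.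
  - split.
    + split.
      * intros K w Hw. destruct (K w Hw) as (t & Ht & [v Hv] & Hs).
        exists v. split; auto. exact (proj1 (proj1 (IHf Hf t)) Hs v Hv).
      * intros K w Hw. destruct (K w Hw) as (v & Hv & Htv).
        exists (fun x => x = v). split; [intros x ->; auto|]. split; [exists v; auto|].
        apply (proj2 (proj1 (IHf Hf _))). intros x ->; auto.
    + split.
      * intros K w Hw [v [Hv Htv]]. exact (proj1 (proj2 (IHf Hf _)) (K w Hw) v Hv Htv).
      * intros K w Hw. apply (proj2 (proj2 (IHf Hf _))). intros v Hv Htv. apply (K w Hw). eauto.
Qed.

Ltac spec_all M s HG := repeat match goal with
  IH : forall (M' : model) (s' : state M'), _ -> _ |- _ => specialize (IH M s HG) end.

Theorem theorem4p3 (Phi : form -> Prop) (psi : form) :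
  Der Phi psi -> entails Phi psi.
Proof.
  intro H.
  induction H; unfold entails, Box, Bot, BotBot, p0 in *; intros M s HG; spec_all M s HG; simpl in *;
   try (timeout 5 firstorder; fail).
  - apply (proj2 (proj2 (char M a H s))). intros w Hw Ta.
    destruct H0 as [HD1 HD2].
    assert (Sub : forall v, v = w -> s v) by (intros v ->; exact Hw).
    assert (K : forall phi, D phi -> supp M phi (fun v => v = w)).
    { intros phi Hp. destruct (HD1 phi Hp) as [Gp | ->].
      - exact (proj1 (down M phi (HD2 phi Hp) s _ Sub) (HG phi Gp)).
      - apply (proj2 (proj1 (char M a H _))). intros v ->; auto. }
    destruct (IHDer M _ K) as [A B]. exact (B w eq_refl (A w eq_refl)).
  - apply (proj2 (proj1 (char M b H0 s))). intros w Hw.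
    exfalso. exact (proj1 (proj2 (char M a H s)) IHDer2 w Hw (proj1 (proj1 (char M a H s)) IHDer1 w Hw)).
  - exists s, (fun _ => False). split; [intro w; tauto|]. split; auto.
    apply (empty M g H). auto.
  - destruct IHDer1 as (t & u & Hu & Ht & Hu').
    destruct H0 as [A1 B1]; destruct H2 as [A2 B2].
    apply (proj1 (union M h H4 s t u Hu)).
    + apply IHDer2. intros phi Hp. destruct (A1 phi Hp) as [Gp | ->]; auto.
      apply (proj1 (down M phi (B1 phi Hp) s t (fun w Hw => proj2 (Hu w) (or_introl Hw)))). auto.
    + apply IHDer3. intros phi Hp. destruct (A2 phi Hp) as [Gp | ->]; auto.
      apply (proj1 (down M phi (B2 phi Hp) s u (fun w Hw => proj2 (Hu w) (or_intror Hw)))). auto.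
  - destruct IHDer1 as (t & u & Hu & Ht & Hu'). destruct H0 as [A B].
    exists t, u. split; [auto|split; auto]. apply IHDer2. intros phi Hp.
    destruct (A phi Hp) as [Gp | ->]; auto.
    apply (proj1 (down M phi (B phi Hp) s u (fun w Hw => proj2 (Hu w) (or_intror Hw)))). auto.
  - destruct IHDer as (t & u & Hu & [T1 T2] & Hu').
    assert (E : forall w, u w <-> s w).
    { intro w. rewrite (Hu w). split; [tauto|]. intros [Ht|?]; [destruct (T2 w Ht (T1 w Ht))|auto]. }
    exact (proj1 (supp_ext M f u s E) Hu').
  - intros w Hw. destruct (IHDer2 w Hw) as (t & A & B & C). exists t. split; auto. split; auto.
    apply IHDer1. intros phi Hp. unfold only in Hp. subst. auto.
  - intros w Hw. apply IHDer. intros phi Hp. exact (H1 phi Hp M s HG w Hw).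
  - intros w Hw. destruct (IHDer1 w Hw) as (t1 & A1 & [v1 B1] & C1).
    destruct (IHDer2 w Hw) as (t2 & A2 & B2 & C2).
    exists (fun v => t1 v \/ t2 v). split; [intros v [?|?]; auto|]. split; [exists v1; auto|].
    exists t1, t2. split; [intro v; tauto|auto].
  - intros w Hw. destruct (IHDer2 w Hw) as (t & A & B & C).
    exists (fun v => Rel M w v), t. split; [intro v; split; [tauto|intros [?|?]; auto]|].
    split; auto.
  - destruct IHDer1 as [K|K]; [apply IHDer2|apply IHDer3]; intros phi [Gp| ->]; auto.
  - destruct (classic (exists w, s w)) as [K|K]; [right; auto|left].
    split; intros w Hw; exfalso; apply K; eauto.
  - exists (fun w => s w /\ exists t : state M, (forall v, t v -> Rel M w v) /\ (exists v, t v) /\ supp M f t),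
      (fun w => s w /\ exists t : state M, (forall v, t v -> Rel M w v) /\ (exists v, t v) /\ supp M g t).
    split; [|split; intros w [_ K]; exact K].
    intro w; split; [|tauto]. intro Hw. destruct (IHDer w Hw) as (t & A & B & [C|C]); [left|right]; eauto.
  - destruct IHDer as (t & u & Hu & A & B). intros w Hw.
    destruct (proj1 (Hu w) Hw) as [K|K]; [destruct (A w K) as (t0 & ? & ? & ?)|destruct (B w K) as (t0 & ? & ? & ?)];
      exists t0; auto.
  - exists (fun w => s w /\ supp M f (fun v => Rel M w v)), (fun w => s w /\ supp M g (fun v => Rel M w v)).
    split; [|split; intros w [_ K]; exact K].
    intro w; split; [|tauto]. intro Hw. destruct (IHDer w Hw); [left|right]; auto.
Qed.
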